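(* For $n \geq 3$, the cycle $C_n$ is diametrical (i.e. $\Gamma_b(C_n) = \mathrm{diam}(C_n)$) if and only if $n \in \{3,4,5\}$.
   Context: Let $G=(V,E)$ be a finite connected graph with distance $d(u,v)$, eccentricity $e(v)=\max_w d(v,w)$ and diameter $\mathrm{diam}(G)=\max_v e(v)$. A broadcast is a function $f: V\to\{0,\dots,\mathrm{diam}(G)\}$ with $f(v)\le e(v)$; its cost is $\sum_v f(v)$; it is dominating if every $u$ has some $v$ with $f(v)\ge 1$ and $d(u,v)\le f(v)$; a dominating broadcast is minimal if decreasing $f(v)$ for any $v$ with $f(v)>0$ destroys domination. $\Gamma_b(G)$ is the maximum cost of a minimal dominating broadcast, and $G$ is called diametrical if $\Gamma_b(G)=\mathrm{diam}(G)$. *)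

(* Defs.v *)
From mathcomp Require Import all_boot.
Set Implicit Arguments. Unset Strict Implicit. Unset Printing Implicit Defensive.

Section Broadcast.
Variables (T : finType) (e : rel T).

Definition ball (k : nat) (u : T) : {set T} :=
  iter k (fun S => S :|: [set y | [exists x in S, e x y]]) [set u].

(* graph distance: least k with v in ball k u (for a connected graph this is
   < #|T|; the value #|T| only arises for disconnected pairs) *)
Definition dist (u v : T) : nat :=
  find (fun k => v \in ball k u) (iota 0 #|T|).

Definition ecc (v : T) : nat := \max_(w : T) dist v w.
Definition diam : nat := \max_(v : T) ecc v.

Definition connectedb : bool := [forall u, forall v, v \in ball #|T| u].

Definition is_broadcast (f : T -> nat) : bool :=
  [forall v, (f v <= diam) && (f v <= ecc v)].

Definition cost (f : T -> nat) : nat := \sum_(v : T) f v.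

Definition dominating (f : T -> nat) : bool :=
  [forall u, exists v, (1 <= f v) && (dist u v <= f v)].

Definition update (f : T -> nat) (v : T) (k : nat) : T -> nat :=
  fun w => if w == v then k else f w.

Definition minimal_dominating (f : T -> nat) : bool :=
  [&& is_broadcast f, dominating f &
      [forall v, forall k : 'I_(f v), ~~ dominating (update f v k)]].

(* Broadcast values are at most ecc v < #|T| in a connected graph, so
   ranging over functions T -> 'I_(#|T|.+1) covers all broadcasts. *)
Definition Gamma_b : nat :=
  \max_(f : {ffun T -> 'I_(#|T|.+1)} | minimal_dominating (fun v => nat_of_ord (f v)))
     cost (fun v => nat_of_ord (f v)).

Definition diametrical : Prop := Gamma_b = diam.

End Broadcast.

Definition cycle_rel (n : nat) : rel 'I_n :=
  fun i j => (val j == (val i).+1 %% n) || (val i == (val j).+1 %% n).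
Arguments cycle_rel n : clear implicits.

(* Main.v *)
Require Import Defs.
From mathcomp Require Import all_boot zify.
From Stdlib Require Import FunctionalExtensionality.
Set Implicit Arguments. Unset Strict Implicit. Unset Printing Implicit Defensive.

Definition dd (n u v : nat) := if u <= v then v - u else v + n - u.
Definition cdn n u v := minn (dd n u v) (dd n v u).
Definition succn n x := if x.+1 == n then 0 else x.+1.
Definition adjn n x y := (y == succn n x) || (x == succn n y).

Ltac splitifs :=
  repeat match goal with
  | |- context [if ?b then _ else _] => let E := fresh "E" in destruct b eqn:E
  | H : context [if ?b then _ else _] |- _ => let E := fresh "E" in destruct b eqn:E
  end.
Ltac crush := unfold adjn, cdn, succn, dd in *; splitifs; lia.

Lemma cycle_relE n (x y : 'I_n) : cycle_rel n x y = adjn n x y.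
Proof.
rewrite /cycle_rel /adjn /succn.
have H z : z < n -> z.+1 %% n = if z.+1 == n then 0 else z.+1.
  move=> zn; case: eqP => [->|ne]; first by rewrite modnn.
  by rewrite modn_small //; lia.
by rewrite !H ?ltn_ord.
Qed.

Lemma cdn0 n u v : u < n -> v < n -> (cdn n u v <= 0) = (v == u).
Proof. move=> un vn; apply/idP/eqP; crush. Qed.

Lemma step_fwd n u v k : u < n -> v < n -> cdn n u v = k.+1 ->
  exists x, [/\ x < n, cdn n u x <= k & adjn n x v].
Proof.
move=> un vn H.
case: (leqP (dd n u v) (dd n v u)) => Hc.
- exists (if v == 0 then n.-1 else v.-1); split.
  + crush.
  + move: H Hc; crush.
  + apply/orP; left; apply/eqP; crush.
- exists (succn n v); split.
  + crush.
  + move: H Hc; crush.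
  + apply/orP; right; apply/eqP; crush.
Qed.

Lemma step_bwd n u x v k : u < n -> x < n -> v < n -> cdn n u x <= k -> adjn n x v ->
  cdn n u v <= k.+1.
Proof.
move=> un xn vn H /orP [] /eqP E; crush.
Qed.

Lemma ball_cycle n (u : 'I_n) k : ball (cycle_rel n) k u = [set v : 'I_n | cdn n u v <= k].
Proof.
elim: k => [|k IH].
  by apply/setP => v; rewrite /ball /= !inE cdn0.
rewrite /ball iterS -/(ball _ k u) IH.
apply/setP => v; rewrite !inE.
apply/idP/idP.
- case/orP => [H|]; first by apply: leq_trans H _.
  case/existsP => x /andP []; rewrite inE cycle_relE => H1 H2.
  exact: (step_bwd (ltn_ord u) (ltn_ord x) (ltn_ord v) H1 H2).
- move=> H; case: (leqP (cdn n u v) k) => [Hk|Hk]; first by [].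
  have E : cdn n u v = k.+1 by lia.
  have [x [xn H1 H2]] := step_fwd (ltn_ord u) (ltn_ord v) E.
  apply/orP; right; apply/existsP; exists (Ordinal xn).
  by rewrite inE H1 cycle_relE.
Qed.

Lemma find_leq c N : c < N -> find (fun k => c <= k) (iota 0 N) = c.
Proof.
move=> cN.
have -> : N = c + (N - c) by lia.
rewrite iotaD find_cat.
have -> : has (fun k => c <= k) (iota 0 c) = false.
  apply/hasPn => k; rewrite mem_iota => /andP [_ ]; rewrite add0n; lia.
have -> : N - c = (N - c).-1.+1 by lia.
by rewrite /= leqnn size_iota addn0.
Qed.

Lemma dist_cycle n (u v : 'I_n) : dist (cycle_rel n) u v = cdn n u v.
Proof.
rewrite /dist card_ord.
rewrite (@eq_find _ _ (fun k => cdn n u v <= k)); last first.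
  by move=> k; rewrite ball_cycle inE.
apply: find_leq.
have := ltn_ord u; have := ltn_ord v; crush.
Qed.

Lemma cdn_half n u v : u < n -> v < n -> cdn n u v <= n./2.
Proof. move=> un vn; crush. Qed.

Lemma ecc_cycle n (v : 'I_n) : ecc (cycle_rel n) v = n./2.
Proof.
apply/eqP; rewrite eqn_leq; apply/andP; split.
  apply/bigmax_leqP => w _; rewrite dist_cycle; apply: cdn_half => //.
have vn := ltn_ord v.
have wn : (if v + n./2 < n then v + n./2 else v + n./2 - n) < n by crush.
rewrite /ecc; apply: leq_trans (leq_bigmax (Ordinal wn)).
rewrite dist_cycle /=; crush.
Qed.

Lemma diam_cycle n : 0 < n -> diam (cycle_rel n) = n./2.
Proof.
move=> n0; apply/eqP; rewrite eqn_leq; apply/andP; split.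
  by apply/bigmax_leqP => w _; rewrite ecc_cycle.
rewrite /diam; apply: leq_trans (leq_bigmax (Ordinal n0)).
by rewrite ecc_cycle.
Qed.

Lemma Gamma_ge_fun n (g : 'I_n -> nat) : (forall w, g w <= n) ->
  minimal_dominating (cycle_rel n) g -> cost g <= Gamma_b (cycle_rel n).
Proof.
move=> gn Hm.
pose F := [ffun w : 'I_n => (inord (g w) : 'I_(#|'I_n|).+1)].
have E : (fun v => nat_of_ord (F v)) = g.
  apply: functional_extensionality => w; rewrite ffunE inordK // card_ord ltnS //.
have := @leq_bigmax_cond _ (fun f : {ffun 'I_n -> 'I_(#|'I_n|).+1} =>
   minimal_dominating (cycle_rel n) (fun v => nat_of_ord (f v)))
   (fun f => cost (fun v => nat_of_ord (f v))) F.
rewrite /= E; apply; exact: Hm.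
Qed.

Lemma not_dom n (h : 'I_n -> nat) (u : 'I_n) :
  (forall w, 0 < h w -> h w < cdn n u w) -> ~~ dominating (cycle_rel n) h.
Proof.
move=> H; apply/negP => /forallP /(_ u) /existsP [w /andP [H1 H2]].
rewrite dist_cycle in H2; have := H w H1; lia.
Qed.

Lemma witness_half n : 2 <= n -> n./2 <= Gamma_b (cycle_rel n).
Proof.
move=> n2.
have n0 : 0 < n by lia.
pose g := fun w : 'I_n => if val w == 0 then n./2 else 0.
have -> : n./2 = cost g.
  rewrite /cost (bigD1 (Ordinal n0)) //= big1 ?addn0 // => i Hi.
  rewrite /g; case: eqP => // Hi0; move: Hi; suff -> : i = Ordinal n0 by rewrite eqxx.
  by apply: val_inj.
apply: Gamma_ge_fun; first by move=> w; rewrite /g; case: ifP => _; lia.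
apply/and3P; split.
- apply/forallP => v; rewrite diam_cycle // ecc_cycle andbb /g; case: ifP => _; lia.
- apply/forallP => u; apply/existsP; exists (Ordinal n0).
  rewrite dist_cycle /g /=; apply/andP; split; first lia.
  apply: cdn_half => //.
- apply/forallP => v; apply/forallP => k.
  have hk := ltn_ord k; move: (nat_of_ord k) hk => kk hk.
  have hv : val v == 0 by move: hk; rewrite /g; case: ifP.
  have hn : n./2 < n by lia.
  apply: (@not_dom _ _ (Ordinal hn)) => w; rewrite /update.
  case: (w =P v) => [->|/eqP Hwv].
    move: hk; rewrite /g hv => hk _; move/eqP: hv => hv; rewrite /= hv; crush.
  rewrite /g; case: ifP => // Hw; exfalso; apply: (negP Hwv).
  by apply/eqP; apply: val_inj; move/eqP: Hw => ->; move/eqP: hv => ->.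
Qed.

Lemma witness_big n : 6 <= n -> n./2 < Gamma_b (cycle_rel n).
Proof.
move=> n6.
pose a := (n-2)./2. have Ha : a = (n-2)./2 by []. clearbody a.
pose m := n - 1 - a.*2. have Hm : m = n - 1 - a.*2 by []. clearbody m.
have n0 : 0 < n by lia.
have mn : m < n by lia.
have m0 : m != 0 by lia.
pose o0 := Ordinal n0. pose om := Ordinal mn.
pose g := fun w : 'I_n => if ((w:nat) == 0) || ((w:nat) == m) then a else 0.
have hne : om != o0 by apply/eqP => /(f_equal val) /= /eqP; rewrite (negbTE m0).
have Hc : a.*2 <= cost g.
  rewrite /cost (bigD1 o0) //= (bigD1 om) ?hne //= /g /= eqxx (negbTE m0) ?eqxx ?orbT.
  lia.
have gb : forall w, g w <= n by move=> w; rewrite /g; case: ifP => _; lia.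
suff Hmd : minimal_dominating (cycle_rel n) g.
  have := Gamma_ge_fun gb Hmd; lia.
apply/and3P; split.
- apply/forallP => v; rewrite diam_cycle // ecc_cycle andbb /g; case: ifP => _; lia.
- apply/forallP => u; apply/existsP.
  have un := ltn_ord u.
  case: (boolP (((u:nat) <= a) || (n - a <= (u:nat)))) => Hu.
    exists o0; rewrite dist_cycle /g /=; apply/andP; split; first lia.
    move: Hu; crush.
  exists om; rewrite dist_cycle /g /= eqxx orbT; apply/andP; split; first lia.
  move: Hu; crush.
- apply/forallP => v; apply/forallP => k.
  have hk := ltn_ord k; move: (nat_of_ord k) hk => kk hk.
  have hv : ((v:nat) == 0) || ((v:nat) == m) by move: hk; rewrite /g; case: ifP.
  have hgv : g v = a by rewrite /g hv.
  rewrite hgv in hk.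
  case/orP: hv => /eqP hv.
  + have hn : n - a < n by lia.
    apply: (@not_dom _ _ (Ordinal hn)) => w; rewrite /update.
    case: (w =P v) => [->|/eqP Hwv].
      move=> _; rewrite /= hv; crush.
    rewrite /g; case: ifP => // /orP [] /eqP Hw.
      exfalso; apply: (negP Hwv); apply/eqP; apply: ord_inj; by rewrite Hw hv.
    move=> _; rewrite /= Hw; crush.
  + have hn : m + a < n by lia.
    apply: (@not_dom _ _ (Ordinal hn)) => w; rewrite /update.
    case: (w =P v) => [->|/eqP Hwv].
      move=> _; rewrite /= hv; crush.
    rewrite /g; case: ifP => // /orP [] /eqP Hw.
      move=> _; rewrite /= Hw; crush.
    exfalso; apply: (negP Hwv); apply/eqP; apply: ord_inj; by rewrite Hw hv.
Qed.

Definition dom_nat n (G : nat -> nat) :=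
  all (fun u => has (fun v => (0 < G v) && (cdn n u v <= G v)) (iota 0 n)) (iota 0 n).
Definition min_nat n (G : nat -> nat) :=
  all (fun v => all (fun k => ~~ dom_nat n (fun w => if w == v then k else G w))
     (iota 0 (G v))) (iota 0 n).

Lemma dominating_nat n (g : 'I_n -> nat) (G : nat -> nat) : (forall i : 'I_n, G i = g i) ->
  dominating (cycle_rel n) g = dom_nat n G.
Proof.
move=> HG; apply/forallP/allP.
- move=> H u; rewrite mem_iota => /andP [_ un].
  have /existsP [v hv] := H (Ordinal un).
  apply/hasP; exists (nat_of_ord v); first by rewrite mem_iota ltn_ord.
  by rewrite HG; rewrite dist_cycle in hv.
- move=> H u; have /hasP [v] : has _ _ := H u (ltac:(by rewrite mem_iota ltn_ord)).
  rewrite mem_iota => /andP [_ vn] hv; apply/existsP; exists (Ordinal vn).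
  by rewrite dist_cycle -HG.
Qed.

Lemma md_nat n (g : 'I_n -> nat) (G : nat -> nat) : (forall i : 'I_n, G i = g i) ->
  minimal_dominating (cycle_rel n) g -> dom_nat n G && min_nat n G.
Proof.
move=> HG /and3P [_ Hd Hm]; rewrite -(dominating_nat HG) Hd /=.
apply/allP => v; rewrite mem_iota => /andP [_ vn].
apply/allP => k; rewrite mem_iota => /andP [_ kv].
have kv' : k < g (Ordinal vn) by rewrite -HG.
have := forallP (forallP Hm (Ordinal vn)) (Ordinal kv').
rewrite (@dominating_nat _ _ (fun w => if w == v then k else G w)) //.
move=> i; rewrite /update HG /=.
by case: (i =P Ordinal vn) => [->|/eqP H]; [rewrite eqxx | case: eqP => // E; case/eqP: H; apply: ord_inj].
Qed.

Fixpoint tuples (n m : nat) : seq (seq nat) :=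
  if n is n'.+1 then [seq x :: t | x <- iota 0 m, t <- tuples n' m] else [:: [::]].

Lemma mem_tuples n m l : size l = n -> all (fun x => x < m) l -> l \in tuples n m.
Proof.
elim: n l => [|n IH] [|x l] //= [sz] /andP [xm al].
apply: (@allpairs_f _ _ _ (fun x t => x :: t)); first by rewrite mem_iota.
exact: IH.
Qed.

Definition check n :=
  all (fun l => (dom_nat n (fun i => nth 0 l i) && min_nat n (fun i => nth 0 l i)) ==> (sumn l <= n./2))
    (tuples n n.+1).

Lemma Gamma_le n : check n -> Gamma_b (cycle_rel n) <= n./2.
Proof.
move=> Hc; apply/bigmax_leqP => F HF.
set g := fun v => nat_of_ord (F v) in HF *.
pose l := [seq g i | i <- enum 'I_n].
have Hl : forall i : 'I_n, nth 0 l i = g i.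
  by move=> i; rewrite (nth_map i) ?size_enum_ord ?ltn_ord // nth_ord_enum.
have := md_nat Hl HF.
have Hin : l \in tuples n n.+1.
  apply: mem_tuples; first by rewrite size_map size_enum_ord.
  apply/allP => x /mapP [i _ ->]; rewrite /g; have := ltn_ord (F i); move: (nat_of_ord (F i)); by rewrite card_ord.
move/allP: Hc => /(_ l Hin) /implyP H /H.
suff -> : cost g = sumn l by [].
by rewrite /cost sumnE big_map big_enum.
Qed.

Lemma check345 : check 3 && check 4 && check 5.
Proof. vm_compute. reflexivity. Qed.

Theorem mainTheorem12 (n : nat) : 3 <= n ->
  (diametrical (cycle_rel n) <-> n \in [:: 3; 4; 5]).
Proof.
move=> n3; rewrite /diametrical diam_cycle; last by lia.
split.
- move=> H; case: (leqP 6 n) => h6.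
    by have := witness_big h6; lia.
  by rewrite !inE; lia.
- move=> Hn.
  have Hc : check n.
    by move: Hn check345; rewrite !inE => /or3P [] /eqP -> /andP [/andP [? ?] ?].
  apply/eqP; rewrite eqn_leq Gamma_le //= witness_half //; lia.
Qed.
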